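(* Let $G$ be a topological group, $\mathcal{Y}$ a Hausdorff locally convex space, and $\pi\colon G\to\mathrm{End}(\mathcal{Y})$ a representation such that the action $(g,y)\mapsto\pi(g)y$, $G\times\mathcal{Y}\to\mathcal{Y}$, is continuous and there is a neighborhood $V$ of $\mathbf{1}\in G$ with $\pi(V)$ equicontinuous on $\mathcal{Y}$. Then $\mathcal{D}^1_{d\pi}=\mathcal{D}^{1,\mathrm{lin}}_{d\pi}$. If moreover (1) $\mathfrak{L}(G)$ is endowed with a Baire topology that is stronger than the compact-open topology; (2) for every $X_1,X_2\in\mathfrak{L}(G)$ there exists $X\in\mathfrak{L}(G)$ with $X=X_1+X_2$ (in the sense below), and $\mathfrak{L}(G)$, with this addition and scalar multiplication $(tX)(s)=X(ts)$, is a topological vector space for the topology in (1); (3) $\mathcal{Y}$ is metrizable; then also $\mathcal{D}^1_{d\pi}=\mathcal{D}^{1,\mathrm{cont}}_{d\pi}$, where continuity in the definition of $\mathcal{D}^{1,\mathrm{cont}}_{d\pi}$ refers to the topology on $\mathfrak{L}(G)$ from (1).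
   Context: All topological groups are Hausdorff; $\mathrm{End}(\mathcal{Y})$ is the algebra of continuous linear operators on $\mathcal{Y}$. $\mathfrak{L}(G)$ is the set of continuous homomorphisms $(\mathbb{R},+)\to G$; the compact-open topology on it is uniform convergence on compact subsets of $\mathbb{R}$. For $X,X_1,X_2\in\mathfrak{L}(G)$ one writes $X=X_1+X_2$ if $X(t)=\lim_{n\to\infty}(X_1(t/n)X_2(t/n))^n$ for all $t\in\mathbb{R}$, uniformly on compact subsets of $\mathbb{R}$. For $X\in\mathfrak{L}(G)$, $d\pi(X)$ is the infinitesimal generator of $t\mapsto\pi(X(t))$, with domain $\mathcal{D}(d\pi(X))$ the set of $y$ for which $d\pi(X)y:=\lim_{t\to0}\frac{\pi(X(t))y-y}{t}$ exists. Define $\mathcal{D}^1_{d\pi}=\bigcap_{X\in\mathfrak{L}(G)}\mathcal{D}(d\pi(X))$; $\mathcal{D}^{1,\mathrm{cont}}_{d\pi}=\{y\in\mathcal{D}^1_{d\pi}\mid X\mapsto d\pi(X)y \text{ is continuous } \mathfrak{L}(G)\to\mathcal{Y}\}$; $\mathcal{D}^{1,\mathrm{lin}}_{d\pi}=\{y\in\mathcal{D}^1_{d\pi}\mid d\pi(X)y=d\pi(X_1)y+d\pi(X_2)y \text{ whenever } X,X_1,X_2\in\mathfrak{L}(G),\ X=X_1+X_2\}$. *)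

(* Defs.v *)
From HB Require Import structures.
From mathcomp Require Import all_boot all_order all_algebra.
From mathcomp Require Import all_classical all_reals all_analysis.
Set Implicit Arguments. Unset Strict Implicit. Unset Printing Implicit Defensive.
Import Order.TTheory GRing.Theory Num.Theory numFieldNormedType.Exports.
Local Open Scope classical_set_scope.
Local Open Scope ring_scope.

Section defs.
Variable R : realType.

Definition topological_group (G : topologicalType) (mul : G -> G -> G)
  (inv : G -> G) (one : G) : Prop :=
  (associative mul /\ left_id one mul /\ right_id one mul /\
   (forall g, mul (inv g) g = one) /\ (forall g, mul g (inv g) = one)) /\
  (continuous (fun p : G * G => mul p.1 p.2) /\ continuous inv /\
   hausdorff_space G).

Fixpoint gpow (G : Type) (mul : G -> G -> G) (one : G) (x : G) (n : nat) : G :=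
  if n is n'.+1 then mul x (gpow mul one x n') else one.

Definition one_param (G : topologicalType) (mul : G -> G -> G) (X : R -> G) : Prop :=
  continuous X /\ forall s t, X (s + t) = mul (X s) (X t).

Definition lie_sum (G : topologicalType) (mul : G -> G -> G) (inv : G -> G) (one : G)
  (X X1 X2 : R -> G) : Prop :=
  forall K : set R, compact K -> forall U : set G, nbhs one U ->
  \forall n \near \oo, forall t, K t ->
     U (mul (inv (X t)) (gpow mul one (mul (X1 (t / n%:R)) (X2 (t / n%:R))) n)).

Definition has_gen (G : topologicalType) (Y : tvsType R) (pi : G -> Y -> Y)
  (X : R -> G) (y : Y) : Prop :=
  exists v : Y, (fun t : R => t^-1 *: (pi (X t) y - y)) @ 0^' --> v.

Definition dpi (G : topologicalType) (Y : tvsType R) (pi : G -> Y -> Y)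
  (X : R -> G) (y : Y) : Y :=
  xget 0 (fun v : Y => (fun t : R => t^-1 *: (pi (X t) y - y)) @ 0^' --> v).

Definition is_representation (G : topologicalType) (mul : G -> G -> G) (one : G)
  (Y : tvsType R) (pi : G -> Y -> Y) : Prop :=
  (forall g, (forall (a : R) (x z : Y), pi g (a *: x + z) = a *: pi g x + pi g z)
             /\ continuous (pi g)) /\
  (forall y, pi one y = y) /\
  (forall g h y, pi (mul g h) y = pi g (pi h y)).

Definition equicontinuous_ops (Y : tvsType R) (I : Type) (V : set I)
  (T : I -> Y -> Y) : Prop :=
  forall W : set Y, nbhs (0 : Y) W ->
    exists U : set Y, nbhs (0 : Y) U /\ forall i, V i -> forall x, U x -> W (T i x).

Definition D1 (G : topologicalType) (mul : G -> G -> G) (Y : tvsType R)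
  (pi : G -> Y -> Y) : set Y :=
  [set y | forall X : R -> G, one_param mul X -> has_gen pi X y].

Definition D1lin (G : topologicalType) (mul : G -> G -> G) (inv : G -> G) (one : G)
  (Y : tvsType R) (pi : G -> Y -> Y) : set Y :=
  [set y | D1 mul pi y /\
    forall X X1 X2 : R -> G, one_param mul X -> one_param mul X1 -> one_param mul X2 ->
      lie_sum mul inv one X X1 X2 -> dpi pi X y = dpi pi X1 y + dpi pi X2 y].

(* [L] with [iota] is a copy of the set L(G), carrying a topology *)
Definition D1cont (G : topologicalType) (mul : G -> G -> G) (Y : tvsType R)
  (pi : G -> Y -> Y) (L : topologicalType) (iota : L -> R -> G) : set Y :=
  [set y | D1 mul pi y /\ continuous (fun a : L => dpi pi (iota a) y)].

Definition metrizable_space (T : topologicalType) : Prop :=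
  exists d : T -> T -> R,
    (forall x y, d x y = 0 <-> x = y) /\ (forall x y, d x y = d y x) /\
    (forall x y z, d x z <= d x y + d y z) /\
    (forall (x : T) (A : set T), nbhs x A <-> exists2 e : R, 0 < e & [set y | d x y < e] `<=` A).

End defs.

Definition baire_space (T : topologicalType) : Prop :=
  forall F : nat -> set T, (forall n, open (F n) /\ dense (F n)) ->
    dense (\bigcap_n F n).

(* Main.v *)
Require Import Defs.
From HB Require Import structures.
From mathcomp Require Import all_boot all_order all_algebra.
From mathcomp Require Import all_classical all_reals all_analysis.
Import Order.TTheory GRing.Theory Num.Theory numFieldNormedType.Exports.
Local Open Scope classical_set_scope.
Local Open Scope ring_scope.

Local Open Scope convex_scope.

Section TvsHelp.
Context {R : realType} {Y : topologicalLmodType R}.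

Lemma tcvgD {T} {F : set_system T} {FF : Filter F} {f g : T -> Y} {a b : Y} :
  f @ F --> a -> g @ F --> b -> (fun x => f x + g x) @ F --> a + b.
Proof.
move=> fa gb; apply: (@continuous2_cvg _ _ _ _ _ _ f g (fun a b => a + b)) => //.
exact: (add_continuous (a, b)).
Qed.

Lemma tcvgZ {T} {F : set_system T} {FF : Filter F} {f : T -> R} {g : T -> Y} {a : R} {b : Y} :
  f @ F --> a -> g @ F --> b -> (fun x => f x *: g x) @ F --> a *: b.
Proof.
move=> fa gb; apply: (@continuous2_cvg _ R^o _ _ _ _ f g (fun a b => a *: b)) => //.
exact: (scale_continuous (a, b)).
Qed.

Lemma tcvgB {T} {F : set_system T} {FF : Filter F} {f g : T -> Y} {a b : Y} :
  f @ F --> a -> g @ F --> b -> (fun x => f x - g x) @ F --> a - b.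
Proof.
move=> fa gb; have := tcvgD fa (tcvgZ (cvg_cst (-1 : R)) gb).
have -> : (fun x => f x + (-1) *: g x) = (fun x => f x - g x).
  by apply: funext => x; rewrite scaleN1r.
by rewrite scaleN1r => H; exact: H.
Qed.

Lemma tcvg_cst {T} {F : set_system T} {FF : Filter F} (a : Y) :
  (fun _ => a) @ F --> a.
Proof. exact: cvg_cst. Qed.

Lemma nbhs_pair {A B C : topologicalType} {h : A -> B -> C} {a b W} :
  {for (a, b), continuous (fun p : A * B => h p.1 p.2)} -> nbhs (h a b) W ->
  exists2 U, nbhs a U & exists2 V, nbhs b V & forall u v, U u -> V v -> W (h u v).
Proof.
move=> hc /hc; case=> /= -[U V] /= [nU nV] UV.
by exists U => //; exists V => // u v Uu Vv; apply: (UV (u, v)).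
Qed.

Lemma nbhs_shift {x : Y} {W : set Y} : nbhs x W -> nbhs 0 [set z | W (x + z)].
Proof.
move=> nW.
have : (fun z : Y => x + z) @ (0 : Y) --> x + 0.
  apply: tcvgD; [exact: cvg_cst | exact: cvg_id].
by rewrite addr0 => /(_ _ nW).
Qed.

Lemma nbhs_unshift {x : Y} {W : set Y} : nbhs 0 W -> nbhs x [set z | W (z - x)].
Proof.
move=> nW.
have : (fun z : Y => z - x) @ x --> x - x.
  apply: tcvgB; [exact: cvg_id | exact: cvg_cst].
by rewrite subrr => /(_ _ nW).
Qed.

End TvsHelp.
Lemma conv_lmodE (R : realType) (Y : tvsType R) (x y : convex_lmodType Y) (p : {i01 R}) :
  (x <| p |> y) = p%:num *: x + (1 - p%:num) *: y.
Proof. by []. Qed.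

Lemma convex_avg {R : realType} {Y : tvsType R} {C : set Y} :
  convex_set (C : set (convex_lmodType Y)) -> forall n (z : nat -> Y),
  (forall k, (k < n)%N -> C (z k)) -> (0 < n)%N ->
  C (n%:R^-1 *: \sum_(k < n) z k).
Proof.
move=> cC; elim=> [//|n IH] z Hz _.
case: n IH Hz => [|n] IH Hz.
  by rewrite big_ord1 invr1 scale1r; apply: Hz.
have p0 : 0 <= (n.+1%:R / n.+2%:R : R) by rewrite divr_ge0.
have p1 : (n.+1%:R / n.+2%:R : R) <= 1 by rewrite ler_pdivrMr ?mul1r ?ler_nat ?ltr0n.
have := cC (n.+1%:R^-1 *: \sum_(k < n.+1) z k : convex_lmodType Y) (z n.+1) (Itv01 p0 p1).
rewrite !inE conv_lmodE /=.
have -> : n.+2%:R^-1 *: \sum_(k < n.+2) z k = n.+1%:R / n.+2%:R *: (n.+1%:R^-1 *: \sum_(k < n.+1) z k) + (1 - n.+1%:R / n.+2%:R) *: z n.+1.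
  rewrite big_ord_recr /= scalerDr scalerA; congr (_ *: _ + _ *: _).
    by rewrite mulrAC mulfV ?mul1r // pnatr_eq0.
  apply: (@mulfI _ n.+2%:R); first by rewrite pnatr_eq0.
  by rewrite mulrBr mulr1 mulrCA !divff ?pnatr_eq0 // mulr1 -natrB // subSnn.
move=> H; apply: H.
- by apply: IH => // k kn; apply: Hz; apply: ltnW.
- by apply: Hz.
Qed.
Lemma convex_nbhs {R : realType} {Y : tvsType R} {E : set Y} : nbhs 0 E ->
  exists C : set Y, [/\ nbhs 0 C, convex_set (C : set (convex_lmodType Y)) & C `<=` E].
Proof.
move=> nE; have [B Bc [Bo Bb]] := @locally_convex R Y.
have [C [BC C0] CE] := Bb 0 E nE.
exists C; split => //.
- by apply: open_nbhs_nbhs; split => //; exact: Bo.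
- by apply: Bc; rewrite inE.
Qed.

Section Alg.
Variables (R : realType) (G : topologicalType) (mul : G -> G -> G)
  (inv : G -> G) (one : G) (Y : tvsType R) (pi : G -> Y -> Y).
Hypothesis Hg : topological_group mul inv one.
Hypothesis Hr : is_representation mul one pi.
Hypothesis Hc : continuous (fun p : G * Y => pi p.1 p.2).
Hypothesis HY : hausdorff_space Y.

Lemma mulA : associative mul. Proof. by case: Hg => [[]]. Qed.
Lemma mul1g : left_id one mul. Proof. by case: Hg => [[_ []]]. Qed.
Lemma mulg1 : right_id one mul. Proof. by case: Hg => [[_ [_ []]]]. Qed.
Lemma mulVg g : mul (inv g) g = one. Proof. by case: Hg => [[_ [_ [_ []]]]]. Qed.
Lemma mulgV g : mul g (inv g) = one. Proof. by case: Hg => [[_ [_ [_ []]]]]. Qed.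
Lemma mul_cont : continuous (fun p : G * G => mul p.1 p.2).
Proof. by case: Hg => _ []. Qed.

Lemma gpowSr x k : gpow mul one x k.+1 = mul (gpow mul one x k) x.
Proof.
elim: k => [|k IH].
  by rewrite /= mulg1 mul1g.
have -> : gpow mul one x k.+2 = mul x (gpow mul one x k.+1) by [].
by rewrite {1}IH mulA.
Qed.

Lemma mul_inv_cancel a b : mul a (mul (inv a) b) = b.
Proof. by rewrite mulA mulgV mul1g. Qed.

Lemma one_param0 (X : R -> G) : one_param mul X -> X 0 = one.
Proof.
case=> _ hom; have h := hom 0 0; rewrite addr0 in h.
have := congr1 (mul (inv (X 0))) h.
by rewrite mulVg mulA mulVg mul1g => ->.
Qed.

Lemma piDZ g a x z : pi g (a *: x + z) = a *: pi g x + pi g z.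
Proof. by case: Hr => [H _]; case: (H g). Qed.
Lemma pi_cont g : continuous (pi g). Proof. by case: Hr => [H _]; case: (H g). Qed.
Lemma pi1 y : pi one y = y. Proof. by case: Hr => _ []. Qed.
Lemma piM g h y : pi (mul g h) y = pi g (pi h y). Proof. by case: Hr => _ []. Qed.

Lemma piD g x z : pi g (x + z) = pi g x + pi g z.
Proof. by have := piDZ g 1 x z; rewrite !scale1r. Qed.
Lemma pi0 g : pi g 0 = 0.
Proof.
have := piD g 0 0; rewrite addr0 => /(congr1 (fun z => z - pi g 0)).
by rewrite subrr addrK.
Qed.
Lemma piZ g a x : pi g (a *: x) = a *: pi g x.
Proof. by rewrite -[a *: x]addr0 piDZ pi0 addr0. Qed.
Lemma piN g x : pi g (- x) = - pi g x.
Proof. by rewrite -scaleN1r piZ scaleN1r. Qed.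
Lemma piB g x z : pi g (x - z) = pi g x - pi g z.
Proof. by rewrite piD piN. Qed.
Lemma pi_sum g n (F : nat -> Y) : pi g (\sum_(k < n) F k) = \sum_(k < n) pi g (F k).
Proof.
elim: n => [|n IH]; first by rewrite !big_ord0 pi0.
by rewrite !big_ord_recr /= piD IH.
Qed.

Lemma telescope g y n :
  pi (gpow mul one g n) y - y = \sum_(k < n) pi (gpow mul one g k) (pi g y - y).
Proof.
elim: n => [|n IH]; first by rewrite big_ord0 /= pi1 subrr.
rewrite big_ord_recr /= -IH piB -piM -gpowSr.
by rewrite [RHS]addrC addrA subrK.
Qed.

Lemma gpow_one k : gpow mul one one k = one.
Proof. by elim: k => //= k ->; rewrite mulg1. Qed.

Lemma gpow_cont k : continuous (fun g => gpow mul one g k).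
Proof.
elim: k => [|k IH] g /=; first exact: cvg_cst.
apply: (@continuous2_cvg _ _ _ _ _ _ id (fun g => gpow mul one g k) mul) => //.
- exact: (mul_cont (g, gpow mul one g k)).
- exact: IH.
Qed.

Lemma gpow_nbhs (U : set G) k0 : nbhs one U ->
  exists2 B, nbhs one B & forall g, B g -> forall k, (k < k0)%N -> U (gpow mul one g k).
Proof.
move=> nU; elim: k0 => [|k0 [B nB HB]].
  by exists setT => //; apply: filterT.
have nP : nbhs one [set g | U (gpow mul one g k0)].
  by have := gpow_cont k0 one => /(_ U); apply; rewrite /= gpow_one.
exists (B `&` [set g | U (gpow mul one g k0)]); first exact: filterI.
move=> g [Bg Ug] k; rewrite ltnS leq_eqVlt => /orP[/eqP -> //|kk0].
exact: HB.
Qed.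
Definition qq (X : R -> G) (y : Y) := fun t : R => t^-1 *: (pi (X t) y - y).

Lemma dpi_cvg (X : R -> G) y : has_gen pi X y -> qq X y @ 0^' --> dpi pi X y.
Proof. by move=> H; exact: (xgetPex 0 H). Qed.

Lemma pi_cvg {T} {F : set_system T} {FF : Filter F} {gs : T -> G} {zs : T -> Y} {g z} :
  gs @ F --> g -> zs @ F --> z -> (fun x => pi (gs x) (zs x)) @ F --> pi g z.
Proof.
move=> hg hz; apply: (@continuous2_cvg _ _ _ _ _ _ gs zs pi) => //.
exact: (Hc (g, z)).
Qed.

Lemma op_cvg0 (X : R -> G) : one_param mul X -> X @ 0 --> one.
Proof. by move=> oX; rewrite -(one_param0 X oX); case: oX => c _; exact: c. Qed.

Lemma op_cvg0' (X : R -> G) : one_param mul X -> X @ 0^' --> one.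
Proof. move=> oX A /(op_cvg0 X oX) H; rewrite !nbhs_filterE in H *; move: H; rewrite /fmap /dnbhs /within /=; by apply: filterS => t Ht _; exact: Ht. Qed.

Lemma right_sub_punct (A : set R) : 0^' A -> 0^'+ A.
Proof. rewrite /dnbhs /at_right /within /=; apply: filterS => t H tpos; apply: H; by rewrite gt_eqF. Qed.

Lemma dpi_add (X X1 X2 : R -> G) y :
  one_param mul X -> one_param mul X1 -> one_param mul X2 ->
  has_gen pi X y -> has_gen pi X1 y -> has_gen pi X2 y ->
  lie_sum mul inv one X X1 X2 ->
  dpi pi X y = dpi pi X1 y + dpi pi X2 y.
Proof.
move=> oX oX1 oX2 gX gX1 gX2 HL.
have qw := dpi_cvg _ _ gX; have q1 := dpi_cvg _ _ gX1; have q2 := dpi_cvg _ _ gX2.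
set w := dpi pi X y in qw *; set v1 := dpi pi X1 y in q1 *.
set v2 := dpi pi X2 y in q2 *.
suff qv : qq X y @ 0^'+ --> v1 + v2.
  have qw' : qq X y @ 0^'+ --> w.
    by move=> A /qw; rewrite !nbhs_filterE; exact: right_sub_punct.
  exact: (cvg_unique HY qw' qv).
move=> W nW.
have [E nE HE] : exists2 E : set Y, nbhs 0 E &
    forall a b, E a -> E b -> W (v1 + v2 + (a + b)).
  have := nbhs_shift nW.
  rewrite -{1}[0 : Y]addr0 => /(nbhs_pair (add_continuous (0, 0))) [U1 nU1 [U2 nU2 H]].
  exists (U1 `&` U2); first exact: filterI.
  by move=> a b [? _] [_ ?]; apply: H.
have [C [nC cC CE]] := convex_nbhs nE.
have [U nU [N nN UN]] : exists2 U : set G, nbhs one U & exists2 N : set Y,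
    nbhs (v1 + v2) N & forall g z, U g -> N z -> C (pi g z - (v1 + v2)).
  apply: (nbhs_pair (W := [set z | C (z - (v1 + v2))]) (Hc (one, v1 + v2))).
  by rewrite /= pi1; exact: nbhs_unshift.
have zb : (fun h => h^-1 *: (pi (mul (X1 h) (X2 h)) y - y)) @ 0^' --> v1 + v2.
  have eq h : h^-1 *: (pi (mul (X1 h) (X2 h)) y - y) = pi (X1 h) (qq X2 y h) + qq X1 y h.
    by rewrite /qq piZ piB -piM -scalerDr addrA subrK.
  rewrite (funext eq) addrC; apply: tcvgD => //.
  by have := pi_cvg (op_cvg0' X1 oX1) q2; rewrite pi1 => H; exact: H.
have [d1 d1p Hd1] : exists2 d1 : R, 0 < d1 &
    forall h, 0 < h -> h < d1 -> N (h^-1 *: (pi (mul (X1 h) (X2 h)) y - y)).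
  have := zb N nN; rewrite nbhs_filterE /fmap /dnbhs /within /=.
  move/nbhs_ballP => [e e0 He]; exists e => // h h0 he; apply: He.
    by rewrite /ball /= sub0r normrN gtr0_norm.
  by rewrite gt_eqF.
have [U2 nU2 [U1 nU1 HU12]] : exists2 U2 : set G, nbhs one U2 &
    exists2 U1 : set G, nbhs one U1 & forall a b, U2 a -> U1 b -> U (mul a b).
  apply: (nbhs_pair (mul_cont (one, one))).
  by rewrite /= mul1g.
have [d2 d2p Hd2] : exists2 d2 : R, 0 < d2 & forall s, `|s| < d2 -> U2 (X s).
  have := op_cvg0 X oX U2 nU2; rewrite nbhs_filterE /fmap /=.
  move/nbhs_ballP => [e e0 He]; exists e => // s hs; apply: He.
  by rewrite /ball /= sub0r normrN.
have [k0 Hk0] : exists k0, forall k, (k0 <= k)%N -> forall s, `[-1, 1]%classic s ->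
    U1 (mul (inv (X s)) (gpow mul one (mul (X1 (s / k%:R)) (X2 (s / k%:R))) k)).
  have := HL `[-1, 1]%classic (@segment_compact _ _ _) U1 nU1.
  by case=> k0 _ Hk; exists k0 => k kk; apply: Hk.
have [B nB HB] := gpow_nbhs U k0 nU.
have [d3 d3p Hd3] : exists2 d3 : R, 0 < d3 & forall h, `|h| < d3 -> B (mul (X1 h) (X2 h)).
  have : (fun h => mul (X1 h) (X2 h)) @ 0 --> mul one one.
    apply: (@continuous2_cvg _ _ _ _ _ _ X1 X2 mul) => //.
    - exact: (mul_cont (one, one)).
    - exact: op_cvg0.
    - exact: op_cvg0.
  rewrite mul1g => /(_ B nB); rewrite nbhs_filterE /fmap /=.
  move/nbhs_ballP => [e e0 He]; exists e => // s hs; apply: He.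
  by rewrite /ball /= sub0r normrN.
rewrite nbhs_filterE /fmap /at_right /within /=.
apply/nbhs_ballP; exists (Num.min d1 (Num.min d2 1)).
  by rewrite /= !lt_min d1p d2p ltr01.
move=> t bt tpos.
have td : t < Num.min d1 (Num.min d2 1).
  by move: bt; rewrite /ball /= sub0r normrN gtr0_norm.
have [td1 td2 t1] : [/\ t < d1, t < d2 & t < 1].
  by move: td; rewrite !lt_min => /andP[-> /andP[-> ->]].
have nUt : nbhs one [set u | C (t^-1 *: (pi (X t) y - pi (X t) (pi u y)))].
  have : (fun u => t^-1 *: (pi (X t) y - pi (X t) (pi u y))) @ one -->
      t^-1 *: (pi (X t) y - pi (X t) (pi one y)).
    apply: tcvgZ; first exact: cvg_cst.
    apply: tcvgB; first exact: cvg_cst.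
    apply: (@continuous_cvg _ _ _ _ _ (fun u => pi u y) (pi (X t))).
      exact: pi_cont.
    by apply: pi_cvg; [exact: cvg_id | exact: cvg_cst].
  by rewrite pi1 subrr scaler0 => /(_ C nC) H; exact: H.
have Ev1 := HL [set t] (@compact_set1 _ t) _ nUt.
have Ev2 := nbhs_infty_gtr (t / d3).
have Ev3 := nbhs_infty_gt 0.
have [n [[H1 H2] H3]] := filter_ex (filterI (filterI Ev1 Ev2) Ev3).
have n0 : (0 < n%:R :> R) by rewrite ltr0n.
have nn0 : (n%:R != 0 :> R) by rewrite gt_eqF.
have t0 : t != 0 by rewrite gt_eqF.
set h := t / n%:R.
have h0 : 0 < h by rewrite divr_gt0.
have ht : h <= t.
  by rewrite /h ler_pdivrMr // ler_peMr ?(ltW tpos) // ler1n.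
have hd3 : h < d3.
  by rewrite /h ltr_pdivrMr // mulrC -ltr_pdivrMr.
set g := mul (X1 h) (X2 h).
set zz := h^-1 *: (pi g y - y).
have Nz : N zz by apply: Hd1 => //; exact: le_lt_trans ht td1.
have Ugk : forall k, (k < n)%N -> U (gpow mul one g k).
  move=> k kn; case: (ltnP k k0) => kk0.
    by apply: HB kk0; apply: Hd3; rewrite gtr0_norm.
  case: k kn kk0 => [_ _|k kn kk0]; first exact: nbhs_singleton nU.
  set s := k.+1%:R * h.
  have eqh : s / k.+1%:R = h by rewrite /s mulrC mulKf ?pnatr_eq0.
  have s0 : 0 <= s by rewrite mulr_ge0 // ltW.
  have st : s <= t.
    by rewrite /s /h mulrA ler_pdivrMr // mulrC ler_pM2l // ler_nat ltnW.
  have gk : gpow mul one g k.+1 = mul (X s) (mul (inv (X s))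
      (gpow mul one (mul (X1 (s / k.+1%:R)) (X2 (s / k.+1%:R))) k.+1)).
    by rewrite mul_inv_cancel eqh.
  rewrite gk; apply: HU12.
    by apply: Hd2; rewrite ger0_norm //; exact: le_lt_trans st td2.
  apply: Hk0 => //; rewrite /= in_itv /=; apply/andP; split.
    exact: le_trans (lerN10 _) s0.
  exact: le_trans st (ltW t1).
have c2C : C (n%:R^-1 *: \sum_(k < n) (pi (gpow mul one g k) zz - (v1 + v2))).
  by apply: (convex_avg cC n (fun k => pi (gpow mul one g k) zz - (v1 + v2))) => // k kn; exact: UN (Ugk k kn) Nz.
have := H1 t erefl; rewrite /= -piM mul_inv_cancel => c1C.
have eS : t^-1 *: (pi (gpow mul one g n) y - y) = n%:R^-1 *: \sum_(k < n) pi (gpow mul one g k) zz.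
  rewrite telescope.
  have -> : pi g y - y = h *: zz by rewrite /zz scalerA mulfV ?scale1r // gt_eqF.
  under eq_bigr do rewrite piZ.
  by rewrite -scaler_sumr scalerA /h mulKf.
have key : qq X y t = v1 + v2 + (t^-1 *: (pi (X t) y - pi (gpow mul one g n) y) +
    n%:R^-1 *: \sum_(k < n) (pi (gpow mul one g k) zz - (v1 + v2))).
  rewrite sumrB sumr_const card_ord [n%:R^-1 *: _]scalerBr.
  have -> : n%:R^-1 *: ((v1 + v2) *+ n) = v1 + v2.
    by rewrite -(@scaler_nat R Y) scalerA mulVf // scale1r.
  rewrite -eS /qq addrCA [v1 + v2 + _]addrC subrK -scalerDr addrA subrK.
  by [].
by rewrite key; apply: HE; apply: CE.
Qed.

Lemma subY_cont (u v : Y) : {for (u, v), continuous (fun p : Y * Y => p.1 - p.2)}.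
Proof. by apply: tcvgB; [exact: cvg_fst | exact: cvg_snd]. Qed.

Lemma natinv_cvg : (fun N : nat => N.+1%:R^-1 : R) @ \oo --> (0 : R)^'.
Proof.
move=> A; rewrite /dnbhs /within /=; move/nbhs_ballP => [e e0 He].
have := near_infty_natSinv_lt (PosNum e0); apply: filterS => N HN.
apply: He; last by rewrite invr_eq0 pnatr_eq0.
by rewrite /ball /= sub0r normrN gtr0_norm.
Qed.

Lemma D1_cont (L : topologicalLmodType R) (iota : L -> R -> G) y :
  (forall X : R -> G, one_param mul X <-> exists a : L, iota a = X) ->
  baire_space L ->
  continuous (iota : L -> {compact-open, R -> G}) ->
  (forall a b : L, lie_sum mul inv one (iota (a + b)) (iota a) (iota b)) ->
  D1 mul pi y -> continuous (fun a : L => dpi pi (iota a) y).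
Proof.
move=> Hiff Hb Hi HL Dy.
set f := fun a : L => dpi pi (iota a) y.
have opa a : one_param mul (iota a) by apply/Hiff; exists a.
have gen a : has_gen pi (iota a) y by exact: Dy.
have fadd a b : f (a + b) = f a + f b.
  exact: dpi_add (opa _) (opa _) (opa _) (gen _) (gen _) (gen _) (HL a b).
have evc s : continuous (fun a => iota a s).
  move=> a A; rewrite nbhsE; case=> O [oO Oa] OA.
  have := Hi a; move/(compact_open_cvgP _ _) => /(_ [set s] O (@compact_set1 _ s) oO).
  have sub1 : [set (iota a : {compact-open, R -> G}) x | x in [set s]] `<=` O.
    by move=> _ [x -> <-].
  move=> /(_ sub1); rewrite nbhs_filterE /fmap /=; apply: filterS => b Hb1.
  by apply: OA; apply: Hb1; exists s.
pose gN (N : nat) (a : L) := qq (iota a) y (N.+1%:R^-1).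
have gcont N : continuous (gN N).
  move=> a; rewrite /gN /qq; apply: tcvgZ; first exact: cvg_cst.
  apply: tcvgB; last exact: cvg_cst.
  by apply: pi_cvg; [exact: evc | exact: cvg_cst].
have gconv a : (fun N => gN N a) @ \oo --> f a.
  exact: (cvg_comp (fun N : nat => N.+1%:R^-1 : R) (qq (iota a) y) natinv_cvg
    (dpi_cvg _ _ (gen a))).
suff c0 : forall W : set Y, nbhs 0 W ->
    exists2 U : set L, nbhs 0 U & forall c, U c -> W (f c).
  move=> a A nA; have [U nU HU] := c0 _ (nbhs_shift nA).
  rewrite nbhs_filterE /fmap /=.
  apply: filterS (nbhs_unshift nU) => b /HU /=.
  by rewrite -fadd [a + _]addrC subrK.
move=> W nW.
have [E nE HE] : exists2 E : set Y, nbhs 0 E &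
    forall x1 x2 x3, E x1 -> E x2 -> E x3 -> W (x1 + x2 + x3).
  move: nW; rewrite -{1}[0 : Y]addr0.
  move=> /(nbhs_pair (add_continuous (0, 0))) [U1 nU1 [U2 nU2 H12]].
  move: nU1; rewrite -{1}[0 : Y]addr0.
  move=> /(nbhs_pair (add_continuous (0, 0))) [U3 nU3 [U4 nU4 H34]].
  exists (U2 `&` U3 `&` U4); first by apply: filterI => //; exact: filterI.
  move=> x1 x2 x3 [[_ ?] _] [[_ _] ?] [[? _] _].
  by apply: H12 => //; apply: H34.
have [D0 nD0 D0E] := uniform_regular nE.
set D := closure D0.
have cD : closed D by exact: closed_closure.
have DE : D `<=` E by [].
pose F N := [set a | forall m k, (N <= m)%N -> (N <= k)%N -> D (gN m a - gN k a)].
have Fcl N : closed (F N).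
  have -> : F N = \bigcap_(p in [set p : nat * nat | (N <= p.1)%N /\ (N <= p.2)%N])
      ((fun a => gN p.1 a - gN p.2 a) @^-1` D).
    apply/seteqP; split => a /= Ha.
      by move=> [m k] /= [Nm Nk]; apply: Ha.
    by move=> m k Nm Nk; apply: (Ha (m, k)).
  apply: closed_bigI => p _; apply: preimage_closed => // a _.
  by apply: tcvgB; exact: gcont.
have cover a : exists N, F N a.
  have nfa : nbhs (f a - f a) D by rewrite subrr; apply: filterS (@subset_closure _ D0) nD0.
  have [U nU [V nV UV]] := nbhs_pair (h := fun u v : Y => u - v) (subY_cont (f a) (f a)) nfa.
  have := gconv a (U `&` V) (filterI nU nV); rewrite nbhs_filterE /fmap /=.
  case=> N _ HN; exists N => m k Nm Nk.
  have [Um _] := HN m Nm; have [_ Vk] := HN k Nk; exact: UV.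
have [N [Ob [oO [a0 Oa0] OF]]] : exists N, exists Ob : set L,
    [/\ open Ob, Ob !=set0 & Ob `<=` F N].
  apply: contrapT => Hn.
  have dc : forall N, open (~` F N) /\ dense (~` F N).
    move=> N; split; first exact: closed_openC.
    move=> O2 O0 oO2; apply: contrapT => H'; apply: Hn; exists N, O2; split => // x Ox.
    by apply: contrapT => Fx; apply: H'; exists x.
  have [x [_ Hx]] := Hb _ dc setT (ex_intro _ 0 I) openT.
  have [N FN] := cover x.
  exact: (Hx N I FN).
have nD : nbhs 0 D by apply: filterS (@subset_closure _ D0) nD0.
have lim1 b : Ob b -> D (gN N b - f b).
  move=> /OF Fb.
  apply: (closed_cvg D cD (F := eventually) (u_ := fun k => gN N b - gN k b)).
    near=> k; apply: Fb => //; near: k; exact: nbhs_infty_ge.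
  by apply: tcvgB; [exact: cvg_cst | exact: gconv].
have lim2 b : Ob b -> D (f b - gN N b).
  move=> /OF Fb.
  apply: (closed_cvg D cD (F := eventually) (u_ := fun k => gN k b - gN N b)).
    near=> k; apply: Fb => //; near: k; exact: nbhs_infty_ge.
  by apply: tcvgB; [exact: gconv | exact: cvg_cst].
have nG : nbhs a0 [set b | D (gN N b - gN N a0)].
  have : (fun b => gN N b - gN N a0) @ a0 --> gN N a0 - gN N a0.
    by apply: tcvgB; [exact: gcont | exact: cvg_cst].
  by rewrite subrr => /(_ D nD) H; exact: H.
have nO : nbhs a0 Ob by apply: open_nbhs_nbhs.
exists ([set c | Ob (a0 + c)] `&` [set c | D (gN N (a0 + c) - gN N a0)]).
  by apply: filterI; [exact: nbhs_shift nO | exact: nbhs_shift nG].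
move=> c [Oc Dc].
have -> : f c = (f (a0 + c) - gN N (a0 + c)) + (gN N (a0 + c) - gN N a0) +
    (gN N a0 - f a0).
  by rewrite fadd !addrA subrK subrK addrAC subrr add0r.
by apply: HE; apply: DE; [exact: lim2 | exact: Dc | exact: lim1].
Unshelve. all: by end_near.
Qed.
End Alg.

Theorem theorem3p5 (R : realType) (G : topologicalType) (mul : G -> G -> G)
  (inv : G -> G) (one : G) (Y : tvsType R) (pi : G -> Y -> Y) :
  topological_group mul inv one ->
  hausdorff_space Y ->
  is_representation mul one pi ->
  continuous (fun p : G * Y => pi p.1 p.2) ->
  (exists V : set G, nbhs one V /\ equicontinuous_ops V pi) ->
  D1 mul pi = D1lin mul inv one pi /\
  (forall (L : topologicalLmodType R) (iota : L -> R -> G),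
     injective iota ->
     (forall X : R -> G, one_param mul X <-> exists a : L, iota a = X) ->
     baire_space L ->
     continuous (iota : L -> {compact-open, R -> G}) ->
     (forall a b : L, lie_sum mul inv one (iota (a + b)) (iota a) (iota b)) ->
     (forall (t : R) (a : L), iota (t *: a) = (fun s : R => iota a (t * s))) ->
     metrizable_space R Y ->
     D1 mul pi = D1cont mul pi iota).
Proof.
move=> Hg HY Hr Hc _.
split.
  apply/seteqP; split => y; last by case.
  move=> Dy; split => // X X1 X2 oX oX1 oX2 HL.
  exact: (dpi_add _ _ _ _ _ _ _ Hg Hr Hc HY _ _ _ _ oX oX1 oX2 (Dy _ oX) (Dy _ oX1) (Dy _ oX2) HL).
move=> L iota _ Hiff Hb Hi HL _ _.
apply/seteqP; split => y; last by case.
move=> Dy; split => //.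
exact: (D1_cont _ _ _ _ _ _ _ Hg Hr Hc HY _ _ _ Hiff Hb Hi HL Dy).
Qed.
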